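(* Let $c$ be an odd positive integer and let $K$ be the set partition of $S_c$ whose only part with more than one element is the set of cyclic shifts of the identity, $\{12\cdots c,\ 23\cdots c1,\ \ldots,\ c12\cdots(c-1)\}$. Let $n>c$ be even. Then the number of even non-avoiders in $S_n$ equals the number of odd non-avoiders in $S_n$.
   Context: Permutations are written in one-line notation as words. The order permutation (standardization) of a word $u$ of distinct positive integers of length $\ell$ is the unique $\pi\in S_\ell$ with $\pi_i<\pi_j$ iff $u_i<u_j$. A hit in a permutation is a contiguous subword of length $c$ whose order permutation is a cyclic shift of the identity of $S_c$; a non-avoider is a permutation containing at least one hit. Even/odd refers to the sign of a permutation. *)

(* Defs.v *)
From mathcomp Require Import all_boot all_order all_fingroup.
Set Implicit Arguments. Unset Strict Implicit. Unset Printing Implicit Defensive.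

(* One-line notation of s in S_n (values 0-based: s(0) ... s(n-1));
   only relative order matters below. *)
Definition oneline n (s : 'S_n) : seq nat := [seq val (s i) | i <- enum 'I_n].

(* The contiguous subword of w of length c starting at position i has as
   order permutation the cyclic shift (k+1)(k+2)...c 1...k of id_c, i.e.
   pi_a = ((a + k) mod c) + 1, and u_a < u_b iff pi_a < pi_b. *)
Definition is_hit_at (c : nat) (w : seq nat) (i : nat) : bool :=
  (i + c <= size w) &&
  [exists k : 'I_c, [forall a : 'I_c, [forall b : 'I_c,
     (nth 0 w (i + a) < nth 0 w (i + b)) == ((a + k) %% c < (b + k) %% c)]]].

Definition nonavoider (c n : nat) (s : 'S_n) : bool :=
  [exists i : 'I_n, is_hit_at c (oneline s) i].

(* Main.v *)
Require Import Defs.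
From mathcomp Require Import all_boot all_order all_fingroup.
From mathcomp Require Import zify.
Set Implicit Arguments. Unset Strict Implicit. Unset Printing Implicit Defensive.

Definition rotp n : 'S_n := perm (@ordS_inj n).

Lemma iter_ordS n (x : 'I_n) m : val (iter m (@ordS n) x) = (x + m) %% n.
Proof.
elim: m => [|m IH] /=; first by rewrite addn0 modn_small.
by rewrite IH -addn1 modnDml addn1 addnS.
Qed.

Lemma odd_rotp n : ~~ odd n -> 0 < n -> odd_perm (rotp n).
Proof.
case: n => // n' Hev _.
have Hall : forall x, porbit (rotp n'.+1) x = porbit (rotp n'.+1) ord0.
  move=> x; apply/eqP; rewrite eq_porbit_mem; apply/porbitP.
  exists x; apply/val_inj; rewrite permX.
  have -> : iter x (rotp n'.+1) ord0 = iter x (@ordS _) ord0.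
    by apply: eq_iter => z; rewrite permE.
  by rewrite iter_ordS /= add0n modn_small.
rewrite /odd_perm.
have -> : porbits (rotp n'.+1) = [set porbit (rotp n'.+1) ord0].
  apply/setP => X; rewrite inE; apply/imsetP/eqP => [[x _ ->]|->]; first exact: Hall.
  by exists ord0.
by rewrite cards1 card_ord /= addbT.
Qed.
Lemma window c n (W : 'I_c -> nat) (k : 'I_c) :
  (forall a, W a < n) -> injective W ->
  (forall a b, (W a < W b) = ((a + k) %% c < (b + k) %% c)) ->
  exists k' : 'I_c, forall a b,
    ((W a).+1 %% n < (W b).+1 %% n) = ((a + k') %% c < (b + k') %% c).
Proof.
move=> Wn Winj H.
have cpos : 0 < c by have := ltn_ord k; lia.
have qle : forall a : 'I_c, (a + k) %% c <= c.-1.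
  by move=> a; have := ltn_pmod (a + k) cpos; lia.
pose b0 : 'I_c := Ordinal (ltn_pmod (c.-1 + (c - k)) cpos).
have qb0 : (b0 + k) %% c = c.-1.
  rewrite /= modnDml.
  have -> : c.-1 + (c - k) + k = c.-1 + c by have := ltn_ord k; lia.
  by rewrite modnDr modn_small //; lia.
have Wle : forall a, W a <= W b0.
  move=> a; rewrite leqNgt H qb0; have := qle a; lia.
case: (eqVneq (W b0) n.-1) => Hb0.
- exists (Ordinal (ltn_pmod (k + 1) cpos)) => a b.
  have Eq : forall a : 'I_c, (a + (k + 1) %% c) %% c = if a == b0 then 0 else ((a + k) %% c).+1.
    move=> x; rewrite modnDmr addnA -modnDml addn1.
    case: (eqVneq x b0) => [->|Hx]; first by rewrite qb0 prednK // modnn.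
    rewrite modn_small //.
    have : W x < W b0.
      have := Wle x; have : W x != W b0 by apply/negP => /eqP /Winj; apply/eqP.
      lia.
    rewrite H qb0; have := qle x; lia.
  have EW : forall a : 'I_c, (W a).+1 %% n = if a == b0 then 0 else (W a).+1.
    move=> x; case: (eqVneq x b0) => [->|Hx].
      by rewrite Hb0 prednK ?modnn //; have := Wn b0; lia.
    rewrite modn_small //.
    have := Wle x; have : W x != W b0 by apply/negP => /eqP /Winj; apply/eqP.
    have := Wn b0; lia.
  rewrite /= !Eq !EW.
  case: (eqVneq a b0) => Ha; case: (eqVneq b b0) => Hb //=.
  by rewrite ltnS H.
- exists k => a b.
  have Hl : forall x, W x < n.-1 by move=> x; have := Wle x; have := Wn b0; lia.
  have Ha : (W a).+1 %% n = (W a).+1 by apply: modn_small; have := Hl a; have := Wn b0; lia.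
  have Hb : (W b).+1 %% n = (W b).+1 by apply: modn_small; have := Hl b; have := Wn b0; lia.
  by rewrite Ha Hb ltnS H.
Qed.

Lemma size_oneline n (s : 'S_n) : size (oneline s) = n.
Proof. by rewrite /oneline size_map size_enum_ord. Qed.

Lemma nth_oneline n (s : 'S_n) j (hj : j < n) : nth 0 (oneline s) j = val (s (Ordinal hj)).
Proof.
rewrite /oneline (nth_map (Ordinal hj)) ?size_enum_ord //.
by congr (val (s _)); apply/val_inj; rewrite /= nth_enum_ord.
Qed.

Lemma hit_rot c n (s : 'S_n) i :
  is_hit_at c (oneline s) i -> is_hit_at c (oneline (s * rotp n)) i.
Proof.
rewrite /is_hit_at !size_oneline => /andP [Hsz /existsP [k Hk]].
rewrite Hsz /=.
have Hj : forall a : 'I_c, i + a < n by move=> a; have := ltn_ord a; lia.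
pose W (a : 'I_c) := nth 0 (oneline s) (i + a).
have WE : forall a, W a = val (s (Ordinal (Hj a))) by move=> a; exact: nth_oneline.
have Wn : forall a, W a < n by move=> a; rewrite WE; exact: ltn_ord.
have Winj : injective W.
  move=> a b; rewrite !WE => /val_inj /perm_inj /(congr1 val) /= E.
  exact/val_inj/(addnI E).
have H : forall a b : 'I_c, (W a < W b) = ((a + k) %% c < (b + k) %% c).
  move=> a b; move/forallP: Hk => /(_ a) /forallP /(_ b) /eqP; exact.
have [k' Hk'] := window Wn Winj H.
apply/existsP; exists k'; apply/forallP => a; apply/forallP => b; apply/eqP.
rewrite !(nth_oneline _ (Hj _)) !permM !permE /= -Hk' !WE //.
Qed.

Lemma nonav_rot c n (s : 'S_n) : nonavoider c s -> nonavoider c (s * rotp n).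
Proof. by move=> /existsP [i Hi]; apply/existsP; exists i; apply: hit_rot. Qed.

Theorem theorem2p14 (c n : nat) :
  odd c -> 0 < c -> c < n -> ~~ odd n ->
  #|[set s : 'S_n | nonavoider c s & ~~ odd_perm s]| =
  #|[set s : 'S_n | nonavoider c s & odd_perm s]|.
Proof.
move=> _ cpos cn ev.
have Hr := odd_rotp ev (leq_ltn_trans (leq0n c) cn).
have finj : injective (fun s : 'S_n => (s * rotp n)%g) := can_inj (mulgK (rotp n)).
have step : forall b : bool,
  #|[set s : 'S_n | nonavoider c s & odd_perm s == b]| <=
  #|[set s : 'S_n | nonavoider c s & odd_perm s == ~~ b]|.
  move=> b; rewrite -(card_imset _ finj); apply: subset_leq_card.
  apply/subsetP => t /imsetP [s]; rewrite !inE => /andP [Hn /eqP Ho] ->.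
  by rewrite nonav_rot //= odd_permM Hr Ho addbT.
have E : forall b, [set s : 'S_n | nonavoider c s & odd_perm s == b] =
   [set s : 'S_n | nonavoider c s & if b then odd_perm s else ~~ odd_perm s].
  by move=> b; apply/setP => s; rewrite !inE; case: b; case: (odd_perm s).
apply/eqP; rewrite eqn_leq.
by have := step false; have := step true; rewrite !E /= => -> ->.
Qed.
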